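(* The $k$-linear category $k[\Delta_{\mathrm{inj}}]$ is free as a left and as a right $u_\Delta(\Omega)$-module, where $u_\Delta(\Omega)$ denotes the image of the $k$-linear functor $u_\Delta\colon\Omega\to k[\Delta_{\mathrm{inj}}]$.
   Context: Let $k$ be a field. For a small category $\mathcal C$, $k[\mathcal C]$ is its $k$-linearization: same objects, $k[\mathcal C](x,y)$ the $k$-vector space with basis $\mathrm{Hom}_{\mathcal C}(x,y)$, composition extended bilinearly. $\Delta_{\mathrm{inj}}$ is the category with objects $[n]=\{0<1<\dots<n\}$, $n\ge 0$, and injective order-preserving maps as morphisms; for $0\le i\le n$, $\delta^i\colon[n-1]\to[n]$ is the injective order-preserving map omitting $i$. $\Omega$ is the $k$-linear category with objects $[n]$, $n\ge0$, generated by arrows $d_n\colon[n-1]\to[n]$ for $n\ge1$ subject only to the relations $d_{n+1}d_n=0$. The $k$-linear functor $u_\Delta\colon\Omega\to k[\Delta_{\mathrm{inj}}]$ is the identity on objects and sends $d_n\mapsto\sum_{i=0}^n(-1)^i\delta^i$. *)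

(* Defs.v *)
From HB Require Import structures.
From mathcomp Require Import all_boot all_order all_algebra.
From mathcomp Require Import zify.
Set Implicit Arguments. Unset Strict Implicit. Unset Printing Implicit Defensive.
Import GRing.Theory.
Local Open Scope ring_scope.

(* Objects: [n] = {0 < ... < n}, encoded by n : nat, carrier 'I_n.+1.
   Morphisms [m] -> [n]: strictly increasing maps 'I_m.+1 -> 'I_n.+1. *)
Definition incr (m n : nat) (f : {ffun 'I_m.+1 -> 'I_n.+1}) : bool :=
  [forall i : 'I_m.+1, forall j : 'I_m.+1, (i < j)%N ==> (f i < f j)%N].

Definition Hom (m n : nat) := {f : {ffun 'I_m.+1 -> 'I_n.+1} | incr f}.

Lemma incr_comp m n p (a : {ffun 'I_m.+1 -> 'I_n.+1}) (b : {ffun 'I_n.+1 -> 'I_p.+1}) :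
  incr a -> incr b -> incr [ffun i => b (a i)].
Proof.
move=> /forallP Ha /forallP Hb; apply/forallP=> i; apply/forallP=> j.
apply/implyP=> ij; rewrite !ffunE.
have /forallP/(_ j)/implyP/(_ ij) := Ha i => aij.
by have /forallP/(_ (a j))/implyP/(_ aij) := Hb (a i).
Qed.

Definition hcomp m n p (b : Hom n p) (a : Hom m n) : Hom m p :=
  exist _ [ffun i => val b (val a i)] (incr_comp (valP a) (valP b)).

Lemma incr_id m : incr [ffun i : 'I_m.+1 => i].
Proof. by apply/forallP=> i; apply/forallP=> j; rewrite !ffunE; apply/implyP. Qed.

Definition idHom m : Hom m m := exist _ [ffun i => i] (incr_id m).

Lemma incr_lift p (i : 'I_p.+2) : incr [ffun j : 'I_p.+1 => lift i j].
Proof.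
apply/forallP=> j; apply/forallP=> l; apply/implyP=> jl; rewrite !ffunE /=.
rewrite /bump; case: (leqP i j); case: (leqP i l); lia.
Qed.

Definition coface p (i : 'I_p.+2) : Hom p p.+1 :=
  exist _ [ffun j : 'I_p.+1 => lift i j] (incr_lift i).

Section Lin.
Variable k : fieldType.

(* k[Delta_inj]([m],[n]) = k-vector space with basis Hom m n
   (finite, so = all functions Hom m n -> k) *)
Local Notation kHom m n := {ffun Hom m n -> k^o}.

Definition comp m n p (g : kHom n p) (f : kHom m n) : kHom m p :=
  [ffun h => \sum_(a : Hom m n) \sum_(b : Hom n p | hcomp b a == h) g b * f a].

Definition kid m : kHom m m := [ffun h => (h == idHom m)%:R].

(* d_{p+1} |-> sum_{i=0}^{p+1} (-1)^i delta^i  in k[Delta_inj]([p],[p+1]) *)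
Definition bd p : kHom p p.+1 :=
  [ffun h => \sum_(i < p.+2) (-1) ^+ i * (h == coface i)%:R].

(* u_Delta of the path d_{d+m} o ... o d_{m+1} : [m] -> [d+m] *)
Fixpoint dpath m d : kHom m (d + m) :=
  match d return kHom m (d + m) with
  | 0 => kid m
  | d'.+1 => comp (bd (d' + m)) (dpath m d')
  end.

(* u_Delta applied to the (unique up to scalar) spanning path of Omega([z],[y]):
   the composite of boundaries if z <= y, and 0 (Omega([z],[y]) = 0) otherwise *)
Definition upath z y : kHom z y :=
  (if (z <= y)%N as b return (z <= y)%N = b -> kHom z y
   then fun h => ecast n (kHom z n) (subnK h) (dpath z (y - z))
   else fun _ => 0) (erefl _).

Definition in_image z y (a : kHom z y) : Prop := exists c : k, a = c *: upath z y.

(* k[Delta_inj] is free as a LEFT u_Delta(Omega)-module: for each source [x],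
   the left module [y] |-> k[Delta_inj]([x],[y]) (action by postcomposition)
   has a basis: generators gen z in k[Delta_inj]([x],[z]) such that every
   f : [x] -> [y] is uniquely sum_{z,j} a_{z,j} o gen_{z,j} with a_{z,j} in the
   image.  (Degrees z > y contribute nothing since k[Delta_inj]([z],[y]) = 0.) *)
Definition left_free : Prop :=
  forall x : nat, exists gen : forall z : nat, seq (kHom x z),
  forall y : nat,
    (forall f : kHom x y, exists a : (forall z : 'I_y.+1, 'I_(size (gen z)) -> kHom z y),
        (forall z j, in_image (a z j)) /\
        f = \sum_(z < y.+1) \sum_(j < size (gen z)) comp (a z j) (nth 0 (gen z) j)) /\
    (forall a : forall z : 'I_y.+1, 'I_(size (gen z)) -> kHom z y,
        (forall z j, in_image (a z j)) ->
        \sum_(z < y.+1) \sum_(j < size (gen z)) comp (a z j) (nth 0 (gen z) j) = 0 ->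
        forall z j, a z j = 0).

(* free as a RIGHT module: for each target [y], the right module
   [x] |-> k[Delta_inj]([x],[y]) (action by precomposition) has a basis
   gen z in k[Delta_inj]([z],[y]); z > y is irrelevant as that space is 0. *)
Definition right_free : Prop :=
  forall y : nat, exists gen : forall z : nat, seq (kHom z y),
  forall x : nat,
    (forall f : kHom x y, exists a : (forall z : 'I_y.+1, 'I_(size (gen z)) -> kHom x z),
        (forall z j, in_image (a z j)) /\
        f = \sum_(z < y.+1) \sum_(j < size (gen z)) comp (nth 0 (gen z) j) (a z j)) /\
    (forall a : forall z : 'I_y.+1, 'I_(size (gen z)) -> kHom x z,
        (forall z j, in_image (a z j)) ->
        \sum_(z < y.+1) \sum_(j < size (gen z)) comp (nth 0 (gen z) j) (a z j) = 0 ->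
        forall z j, a z j = 0).
End Lin.

(* Main.v *)
Require Import Defs.
From HB Require Import structures.
From mathcomp Require Import all_boot all_order all_algebra.
From mathcomp Require Import zify.
From Stdlib Require Import ClassicalEpsilon.
Import Defs. Import GRing.Theory.
Set Implicit Arguments. Unset Strict Implicit. Unset Printing Implicit Defensive.
Local Open Scope ring_scope.

Section LA.
Variables (K : fieldType) (U V W : vectType K) (P : 'Hom(U, V)) (Q : 'Hom(V, W)).
Local Notation bV := (vbasis (limg P)^C : seq V).
Local Notation bW := (vbasis (limg Q)^C : seq W).

Lemma span_basis (T : vectType K) (S : {vspace T}) (c : T) : c \in S ->
  exists al : 'I_(size (vbasis S : seq T)) -> K,
    c = \sum_i al i *: (vbasis S : seq T)`_i.
Proof.
move=> cS; have /andP[/eqP Hs _] := vbasisP S.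
have cS' : c \in <<in_tuple (vbasis S : seq T)>>%VS by rewrite /= Hs.
by exists (fun i => coord (in_tuple (vbasis S : seq T)) i c); exact: (coord_span cS').
Qed.

Lemma free_basis (T : vectType K) (S : {vspace T}) (al : 'I_(size (vbasis S : seq T)) -> K) :
  \sum_i al i *: (vbasis S : seq T)`_i = 0 -> forall i, al i = 0.
Proof.
have /andP[_ Hf] := vbasisP S.
move: Hf => /(@freeP _ _ _ (in_tuple (vbasis S : seq T))) Hf; exact: Hf.
Qed.

Lemma in_basis_span (T : vectType K) (S : {vspace T}) (al : 'I_(size (vbasis S : seq T)) -> K) :
  \sum_i al i *: (vbasis S : seq T)`_i \in S.
Proof.
apply: memv_suml => i _; apply: memvZ; apply: vbasis_mem; exact: mem_nth.
Qed.

Lemma exist_decomp : (forall u, Q (P u) = 0) -> forall w,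
  exists (al : 'I_(size bW) -> K) (be : 'I_(size bV) -> K),
    w = \sum_i al i *: bW`_i + Q (\sum_j be j *: bV`_j).
Proof.
move=> QP w.
have : w \in (limg Q + (limg Q)^C)%VS by rewrite addv_complf memvf.
case/memv_addP=> u /memv_imgP [v _ ->] [c cC ->].
have : v \in (limg P + (limg P)^C)%VS by rewrite addv_complf memvf.
case/memv_addP=> u' /memv_imgP [v' _ ->] [c' cC' ->].
have [al Hal] := @span_basis _ _ _ cC; have [be Hbe] := @span_basis _ _ _ cC'.
exists al, be; rewrite -Hal -Hbe linearD /= QP add0r addrC //.
Qed.

Lemma uniq_decomp : (forall v, Q v = 0 -> v \in limg P) ->
  forall (al : 'I_(size bW) -> K) (be : 'I_(size bV) -> K),
    \sum_i al i *: bW`_i + Q (\sum_j be j *: bV`_j) = 0 ->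
    (forall i, al i = 0) /\ (forall j, be j = 0).
Proof.
move=> EX al be.
set c := \sum_i _; set c' := \sum_j _ => H.
have cC : c \in (limg Q)^C%VS by apply: in_basis_span.
have c'C : c' \in (limg P)^C%VS by apply: in_basis_span.
have c0 : c = 0.
  apply/eqP; rewrite -memv0 -(capv_compl (limg Q)) memv_cap cC andbT.
  have -> : c = Q (- c') by apply/eqP; rewrite linearN -addr_eq0 H.
  exact: memv_img (memvf _).
move: H; rewrite c0 add0r => Hq.
have c'0 : c' = 0.
  apply/eqP; rewrite -memv0 -(capv_compl (limg P)) memv_cap c'C andbT.
  exact: EX.
split; [exact: (@free_basis _ _ _ c0) | exact: (@free_basis _ _ _ c'0)].
Qed.
End LA.


Lemma hom_eq m n (a b : Hom m n) : (forall j, (val a j : nat) = val b j) -> a = b.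
Proof. by move=> H; apply: val_inj; apply/ffunP=> j; apply: val_inj; exact: H. Qed.

Lemma hcompE m n p (b : Hom n p) (a : Hom m n) j : val (hcomp b a) j = val b (val a j).
Proof. by rewrite /hcomp /= ffunE. Qed.

Lemma cofaceE p (i : 'I_p.+2) j : (val (coface i) j : nat) = bump i j.
Proof. by rewrite /coface /= ffunE. Qed.

Lemma idHomE m j : val (idHom m) j = j.
Proof. by rewrite /idHom /= ffunE. Qed.

Lemma hom_lt m n (a : Hom m n) (i j : 'I_m.+1) : (i < j)%N -> (val a i < val a j)%N.
Proof. by case: a => f /= /forallP/(_ i)/forallP/(_ j)/implyP. Qed.

Lemma hom_le m n (a : Hom m n) (i j : 'I_m.+1) : (i <= j)%N -> (val a i <= val a j)%N.
Proof.
rewrite leq_eqVlt => /orP [/eqP E|/hom_lt/ltnW //].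
by have -> : i = j by apply: val_inj.
Qed.

Lemma hom_inj m n (a : Hom m n) (i j : 'I_m.+1) : val a i = val a j -> i = j.
Proof.
move=> E; case: (ltngtP i j) => [/(hom_lt a)|/(hom_lt a)|/val_inj //]; by rewrite E ltnn.
Qed.

Lemma hom_ge m n (a : Hom m n) (i : 'I_m.+1) : (i <= val a i)%N.
Proof.
case: i => i Hi; elim: i Hi => [//|i IH] Hi /=.
have := hom_lt a (i:=Ordinal (ltnW Hi)) (j:=Ordinal Hi) (ltnSn i).
have := IH (ltnW Hi); simpl; lia.
Qed.

Lemma hom_mn m n (a : Hom m n) : (m <= n)%N.
Proof. have := hom_ge a ord_max; have := ltn_ord (val a ord_max); simpl; lia. Qed.

Lemma hcompA m n p q (c : Hom p q) (b : Hom n p) (a : Hom m n) :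
  hcomp c (hcomp b a) = hcomp (hcomp c b) a.
Proof. by apply: hom_eq=> j; rewrite !hcompE. Qed.

Lemma hcomp1 m n (b : Hom m n) : hcomp b (idHom m) = b.
Proof. by apply: hom_eq=> j; rewrite !hcompE idHomE. Qed.
Lemma hcomp1l m n (b : Hom m n) : hcomp (idHom n) b = b.
Proof. by apply: hom_eq=> j; rewrite !hcompE idHomE. Qed.

Lemma hcomp_injl m n p (c : Hom n p) (a b : Hom m n) : hcomp c a = hcomp c b -> a = b.
Proof.
move=> E; apply: hom_eq => j.
have : val (hcomp c a) j = val (hcomp c b) j by rewrite E.
by rewrite !hcompE => /hom_inj ->.
Qed.

Section K.
Variable k : fieldType.
Local Notation kH m n := {ffun Hom m n -> k^o}.

Definition e m n (a : Hom m n) : kH m n := [ffun h => (h == a)%:R].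

Lemma ffunZk m n (c : k) (f : kH m n) h : (c *: f) h = c * f h.
Proof. by rewrite /GRing.scale /= ffunE. Qed.

Lemma scalekE (c v : k) : c *: (v : k^o) = c * v.
Proof. by []. Qed.

Lemma ffun_expand m n (f : kH m n) : f = \sum_a f a *: e a.
Proof.
apply/ffunP=> h; rewrite sum_ffunE (bigD1 h) //= big1 => [|a /negbTE ha].
  by rewrite ffunZk !ffunE eqxx addr0 /= mulr1.
by rewrite ffunZk !ffunE eq_sym ha /= mulr0.
Qed.

Lemma compE m n p (g : kH n p) (f : kH m n) h :
  comp g f h = \sum_a \sum_(b | hcomp b a == h) g b * f a.
Proof. by rewrite /comp ffunE. Qed.

Lemma comp_addr m n p (g : kH n p) : {morph @comp k m n p g : f1 f2 / f1 + f2}.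
Proof.
move=> f1 f2; apply/ffunP=> h; rewrite !ffunE -big_split /=.
by apply: eq_bigr => a _; rewrite -big_split /=; apply: eq_bigr => b _; rewrite ffunE mulrDr.
Qed.
Lemma comp_addl m n p (f : kH m n) : {morph (fun g : kH n p => @comp k m n p g f) : g1 g2 / g1 + g2}.
Proof.
move=> g1 g2; apply/ffunP=> h; rewrite !ffunE -big_split /=.
by apply: eq_bigr => a _; rewrite -big_split /=; apply: eq_bigr => b _; rewrite ffunE mulrDl.
Qed.
Lemma comp0r m n p (g : kH n p) : comp g (0 : kH m n) = 0.
Proof.
apply/ffunP=> h; rewrite !ffunE big1 // => a _; rewrite big1 // => b _; by rewrite ffunE mulr0.
Qed.
Lemma comp0l m n p (f : kH m n) : comp (0 : kH n p) f = 0.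
Proof.
apply/ffunP=> h; rewrite !ffunE big1 // => a _; rewrite big1 // => b _; by rewrite ffunE mul0r.
Qed.
Lemma comp_scaler m n p (g : kH n p) (c : k) (f : kH m n) : comp g (c *: f) = c *: comp g f.
Proof.
apply/ffunP=> h; rewrite ffunZk !compE mulr_sumr; apply: eq_bigr => a _.
rewrite mulr_sumr; apply: eq_bigr => b _; rewrite ffunZk /=.
by rewrite mulrCA.
Qed.
Lemma comp_scalel m n p (g : kH n p) (c : k) (f : kH m n) : comp (c *: g) f = c *: comp g f.
Proof.
apply/ffunP=> h; rewrite ffunZk !compE mulr_sumr; apply: eq_bigr => a _.
rewrite mulr_sumr; apply: eq_bigr => b _; rewrite ffunZk /=.
by rewrite mulrA.
Qed.
Lemma comp_sumr m n p (g : kH n p) I (r : seq I) (P : pred I) (F : I -> kH m n) :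
  comp g (\sum_(i <- r | P i) F i) = \sum_(i <- r | P i) comp g (F i).
Proof. exact: (big_morph _ (comp_addr g) (comp0r _ g)). Qed.
Lemma comp_suml m n p (f : kH m n) I (r : seq I) (P : pred I) (F : I -> kH n p) :
  comp (\sum_(i <- r | P i) F i) f = \sum_(i <- r | P i) comp (F i) f.
Proof. exact: (big_morph (fun g => comp g f) (comp_addl f) (comp0l _ f)). Qed.

Lemma comp_e m n p (b : Hom n p) (a : Hom m n) : comp (e b) (e a) = e (hcomp b a).
Proof.
apply/ffunP=> h; rewrite compE (bigD1 a) //= [X in _ + X]big1 => [|a' ha]; last first.
  by rewrite big1 // => b' _; rewrite !ffunE (negbTE ha) mulr0.
rewrite addr0 ffunE eqxx /= [RHS]ffunE; under eq_bigr => b0 _ do rewrite mulr1.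
case: (eqVneq h (hcomp b a)) => [->|ne].
  rewrite (bigD1 b) //= [X in _ + X]big1 => [|b' /andP[_ hb]]; last by rewrite !ffunE (negbTE hb).
  by rewrite !ffunE !eqxx addr0.
rewrite big1 // => b' /eqP E; rewrite !ffunE.
by case: eqP => // Eb; move: ne; rewrite -E Eb eqxx.
Qed.

Lemma kidE m : kid k m = e (idHom m).
Proof. by []. Qed.

Lemma comp_kid m n (f : kH m n) : comp (kid k n) f = f.
Proof.
rewrite [in RHS](ffun_expand f) [f in comp _ f](ffun_expand f) comp_sumr.
by apply: eq_bigr => a _; rewrite comp_scaler kidE comp_e hcomp1l.
Qed.
Lemma comp_kidr m n (f : kH m n) : comp f (kid k m) = f.
Proof.
rewrite [in RHS](ffun_expand f) [f in comp f _](ffun_expand f) comp_suml.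
by apply: eq_bigr => a _; rewrite comp_scalel kidE comp_e hcomp1.
Qed.

Lemma bdE p : bd k p = \sum_(i < p.+2) (-1) ^+ i *: e (coface i).
Proof.
by apply/ffunP=> h; rewrite sum_ffunE ffunE; apply: eq_bigr => i _; rewrite !ffunE.
Qed.

Lemma dE p m (a : Hom m p) :
  comp (bd k p) (e a) = \sum_(i < p.+2) (-1) ^+ i *: e (hcomp (coface i) a).
Proof. by rewrite bdE comp_suml; apply: eq_bigr => i _; rewrite comp_scalel comp_e. Qed.

Lemma dRE p n (b : Hom p.+1 n) :
  comp (e b) (bd k p) = \sum_(i < p.+2) (-1) ^+ i *: e (hcomp b (coface i)).
Proof. by rewrite bdE comp_sumr; apply: eq_bigr => i _; rewrite comp_scaler comp_e. Qed.


Lemma bumpC' (i j t : nat) : (j <= i)%N -> bump i.+1 (bump j t) = bump j (bump i t).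
Proof. rewrite /bump => ji; case: (leqP j t); case: (leqP i t); simpl; try lia; case: leqP; case: leqP; simpl; lia. Qed.

Lemma cosimp p (i j : 'I_p.+2) (i' j' : 'I_p.+3) : (j <= i)%N -> val i' = i.+1 -> val j' = j ->
  hcomp (coface i') (coface j) = hcomp (coface j') (coface i).
Proof.
move=> ji Hi Hj; apply: hom_eq => t; rewrite !hcompE !cofaceE Hi Hj.
exact: bumpC'.
Qed.

Lemma pair_sum (V : lmodType k) (G : nat -> nat -> V) n :
  (forall i j, (j <= i)%N -> (i < n)%N -> G i.+1 j = G j i) ->
  \sum_(i < n.+1) \sum_(j < n) (-1) ^+ i *: ((-1) ^+ j *: G i j) = 0.
Proof.
elim: n => [|n IH] H; first by rewrite big1 // => i _; rewrite big_ord0.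
rewrite big_ord_recr /=.
rewrite (eq_bigr (fun i : 'I_n.+1 => \sum_(j < n) (-1) ^+ i *: ((-1) ^+ j *: G i j) + (-1) ^+ i *: ((-1) ^+ n *: G i n))); last by move=> i _; rewrite big_ord_recr.
rewrite big_split /= IH ?add0r; last by move=> i j ji lt; apply: H => //; lia.
rewrite -big_split /= big1 // => i _.
rewrite H //; last by rewrite -ltnS.
rewrite !scalerA exprS mulN1r !mulNr scaleNr mulrC subrr //.
Qed.

Lemma ddL_e p m (a : Hom m p) : comp (bd k p.+1) (comp (bd k p) (e a)) = 0.
Proof.
rewrite dE comp_sumr.
under eq_bigr => i _ do rewrite comp_scaler dE scaler_sumr.
rewrite exchange_big /=.
pose G (I J : nat) := e (hcomp (coface (inord I : 'I_p.+3)) (hcomp (coface (inord J : 'I_p.+2)) a)).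
transitivity (\sum_(i < p.+3) \sum_(j < p.+2) (-1) ^+ i *: ((-1) ^+ j *: G i j)); last first.
  apply: pair_sum => i j ji lt; rewrite /G !hcompA; congr (e (hcomp _ a)).
  apply: cosimp => //; rewrite /= ?inordK //; lia.
apply: eq_bigr => i _; apply: eq_bigr => j _; rewrite scalerA mulrC -scalerA /G !inord_val //.
Qed.

Lemma ddL p m (f : kH m p) : comp (bd k p.+1) (comp (bd k p) f) = 0.
Proof.
rewrite (ffun_expand f) !comp_sumr big1 // => a _.
by rewrite !comp_scaler ddL_e scaler0.
Qed.

Lemma ddR_e p n (b : Hom p.+2 n) : comp (comp (e b) (bd k p.+1)) (bd k p) = 0.
Proof.
rewrite dRE comp_suml.
under eq_bigr => i _ do rewrite comp_scalel dRE scaler_sumr.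
pose G (I J : nat) := e (hcomp (hcomp b (coface (inord I : 'I_p.+3))) (coface (inord J : 'I_p.+2))).
transitivity (\sum_(i < p.+3) \sum_(j < p.+2) (-1) ^+ i *: ((-1) ^+ j *: G i j)); last first.
  apply: pair_sum => i j ji lt; rewrite /G -!hcompA; congr (e (hcomp b _)).
  apply: cosimp => //; rewrite /= ?inordK //; lia.
apply: eq_bigr => i _; apply: eq_bigr => j _; rewrite /G !inord_val //.
Qed.

Lemma ddR p n (f : kH p.+2 n) : comp (comp f (bd k p.+1)) (bd k p) = 0.
Proof.
rewrite (ffun_expand f) !comp_suml big1 // => a _.
by rewrite !comp_scalel ddR_e scaler0.
Qed.

Lemma dpath0 z t : (2 <= t)%N -> dpath k z t = 0.
Proof. case: t => [|[|t]] // _; exact: ddL. Qed.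

Lemma upath_le z y (h : (z <= y)%N) :
  upath k z y = ecast n (kH z n) (subnK h) (dpath k z (y - z)).
Proof.
rewrite /upath.
suff G: forall b (E : (z <= y)%N = b) (H: b = true),
  (if b as b' return ((z <= y)%N = b' -> kH z y)
   then (fun h' => ecast n (kH z n) (subnK h') (dpath k z (y - z))) else (fun _ => 0)) E
  = ecast n (kH z n) (subnK h) (dpath k z (y - z)) by exact: G.
by move=> b E H; move: E; rewrite H => E; rewrite (bool_irrelevance E h).
Qed.

Lemma upath_gt z y : (y < z)%N -> upath k z y = 0.
Proof.
move=> h; rewrite /upath.
suff G: forall b (E : (z <= y)%N = b) (H: b = false),
  (if b as b' return ((z <= y)%N = b' -> kH z y)
   then (fun h' => ecast n (kH z n) (subnK h') (dpath k z (y - z))) else (fun _ => 0)) E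
  = 0 by apply: G; apply/negbTE; rewrite -ltnNge.
by move=> b E H; move: E; rewrite H.
Qed.

Lemma upath_id z : upath k z z = kid k z.
Proof.
rewrite upath_le; move: (subnK _); rewrite subnn => e0.
by rewrite (eq_irrelevance e0 (erefl z)).
Qed.

Lemma upath_bd z : upath k z z.+1 = bd k z.
Proof.
rewrite upath_le; move: (subnK _); rewrite subSnn => e0.
by rewrite (eq_irrelevance e0 (erefl z.+1)) /= comp_kidr.
Qed.

Lemma ecast0 z t y (e0 : (t + z)%N = y) (x : kH z (t + z)) : x = 0 -> ecast n (kH z n) e0 x = 0.
Proof. by case: y / e0. Qed.

Lemma upath_far z y : (z.+2 <= y)%N -> upath k z y = 0.
Proof.
move=> h; have h' : (z <= y)%N by lia.
rewrite (upath_le h'); apply: ecast0; apply: dpath0; lia.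
Qed.

End K.


Lemma restr_ex m n (h : Hom m n.+1) : (forall t, (val (val h t) < n.+1)%N) ->
  exists h' : Hom m n, h = hcomp (coface ord_max) h'.
Proof.
move=> H.
have Hinc : incr [ffun t => (inord (val (val h t)) : 'I_n.+1)].
  apply/forallP=> i; apply/forallP=> j; apply/implyP=> ij; rewrite !ffunE /= !inordK; try exact: H.
  exact: hom_lt.
exists (exist (fun f : {ffun _ -> _} => incr f) _ Hinc); apply: hom_eq => t; rewrite hcompE cofaceE /= ffunE /= inordK //.
  by rewrite /bump; case: leqP => //; have := H t; simpl; lia.
exact: H.
Qed.

Lemma face_max_inv y m (i : 'I_y.+1) (h : Hom m y) (g : Hom m y) :
  hcomp (coface (widen_ord (leqnSn _) i)) h = hcomp (coface ord_max) g ->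
  forall t, (val h t < y)%N.
Proof.
move=> E t.
have : (val (hcomp (coface (widen_ord (leqnSn _) i)) h) t : nat) = val (hcomp (coface ord_max) g) t by rewrite E.
rewrite !hcompE !cofaceE /=.
have := ltn_ord (val g t); have := ltn_ord (val h t); have := ltn_ord i.
rewrite /bump; case: leqP; case: leqP; simpl; lia.
Qed.

Section K.
Variable k : fieldType.
Local Notation kH m n := {ffun Hom m n -> k^o}.

Definition sL x y (g : kH x y.+1) : kH x y :=
  [ffun h => (-1) ^+ y.+1 * g (hcomp (coface ord_max) h)].

Lemma sL_add x y : {morph @sL x y : f1 f2 / f1 + f2}.
Proof. by move=> f1 f2; apply/ffunP=> h; rewrite !ffunE mulrDr. Qed.
Lemma sL0 x y : @sL x y 0 = 0.
Proof. by apply/ffunP=> h; rewrite !ffunE mulr0. Qed.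
Lemma sL_scale x y c (f : kH x y.+1) : sL (c *: f) = c *: sL f.
Proof. by apply/ffunP=> h; rewrite (ffunZk c (sL f) h) /sL !ffunE scalekE mulrCA. Qed.
Lemma sL_sum x y I (r : seq I) (P : pred I) (F : I -> kH x y.+1) :
  sL (\sum_(i <- r | P i) F i) = \sum_(i <- r | P i) sL (F i).
Proof. exact: (big_morph _ (@sL_add x y) (@sL0 x y)). Qed.

Lemma sL_e_in x y (h : Hom x y) : sL (e k (hcomp (coface ord_max) h)) = (-1) ^+ y.+1 *: e k h.
Proof.
apply/ffunP=> g; rewrite ffunZk /sL /e !ffunE.
case: (eqVneq g h) => [->|ne]; first by rewrite !eqxx.
have ne' : hcomp (coface ord_max) g != hcomp (coface ord_max) h.
  by apply: contra ne => /eqP/hcomp_injl ->.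
by rewrite (negbTE ne').
Qed.

Lemma sL_e_out x y (g : Hom x y.+1) : (forall h, g <> hcomp (coface ord_max) h) -> sL (e k g) = 0.
Proof.
move=> H; apply/ffunP=> h; rewrite !ffunE; case: eqP => [E|_]; last by rewrite mulr0.
by case: (H h).
Qed.

Local Notation d y := (@comp k _ y y.+1 (bd k y)).

Lemma homotL0_e x (h : Hom x 0) : sL (d 0 (e k h)) = e k h.
Proof.
rewrite dE sL_sum big_ord_recr /= big_ord1 /=.
rewrite sL_scale sL_e_out ?scaler0 ?add0r; last first.
  move=> g E; have := @face_max_inv 0 x ord0 h g E ord0; by [].
by rewrite sL_scale sL_e_in scalerA expr1 mulrNN mulr1 scale1r.
Qed.

Lemma homotL_e x y (h : Hom x y.+1) : sL (d y.+1 (e k h)) + d y (sL (e k h)) = e k h.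
Proof.
rewrite dE sL_sum big_ord_recr /= sL_scale sL_e_in scalerA -expr2 -exprM.
rewrite mulnC exprM sqrrN expr1n expr1n scale1r addrAC.
have [/existsP [h' /eqP Eh]|nE] := boolP [exists h' : Hom x y, h == hcomp (coface ord_max) h'].
- rewrite Eh sL_e_in comp_scaler dE scaler_sumr -big_split /=.
  rewrite big1 ?add0r // => i _.
  rewrite hcompA -(@cosimp y ord_max i ord_max (widen_ord (leqnSn _) i)) -?hcompA //; last by rewrite /=; have := ltn_ord i; lia.
  rewrite sL_scale sL_e_in !scalerA -scalerDl.
  by rewrite exprS mulN1r mulrN mulrC addNr scale0r.
- have nE' : forall h', h <> hcomp (coface ord_max) h'.
    by move=> h' E; move/existsP: nE; apply; exists h'; rewrite E.
  rewrite sL_e_out // comp0r addr0 big1 ?add0r // => i _.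
  rewrite sL_scale sL_e_out ?scaler0 // => g E.
  have [h'' Eh''] := restr_ex (face_max_inv E).
  by case: (nE' h'').
Qed.

Lemma homotL0 x (f : kH x 0) : sL (d 0 f) = f.
Proof.
rewrite [in RHS](ffun_expand f) [f in d 0 f](ffun_expand f) comp_sumr sL_sum.
by apply: eq_bigr => a _; rewrite comp_scaler sL_scale homotL0_e.
Qed.

Lemma homotL x y (f : kH x y.+1) : sL (d y.+1 f) + d y (sL f) = f.
Proof.
rewrite (ffun_expand f) comp_sumr sL_sum sL_sum comp_sumr -big_split /=.
by apply: eq_bigr => a _; rewrite comp_scaler !sL_scale comp_scaler -scalerDr homotL_e.
Qed.

End K.


Lemma cofaceL p (i : 'I_p.+2) j : val (coface i) j = lift i j.
Proof. by rewrite /coface /= ffunE. Qed.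

Definition iscone m n (g : Hom m.+1 n) (a : Hom m n) :=
  (val (val g ord0) == 0%N) && (hcomp g (coface ord0) == a).

Lemma cone_val m n (g : Hom m.+1 n) (a : Hom m n) t : iscone g a ->
  val g (lift ord0 t) = val a t.
Proof. by case/andP=> _ /eqP <-; rewrite hcompE cofaceL. Qed.

Lemma cone_uniq m n (g g' : Hom m.+1 n) (a : Hom m n) : iscone g a -> iscone g' a -> g = g'.
Proof.
move=> H H'; apply: hom_eq => t; case: (unliftP ord0 t) => [t'|] ->.
  by rewrite (cone_val _ H) (cone_val _ H').
by case/andP: H => /eqP -> _; case/andP: H' => /eqP -> _.
Qed.

Lemma cone_ex m n (a : Hom m n) : (val (val a ord0) != 0%N) -> exists g, iscone g a.
Proof.
move=> a0.
pose gf : {ffun 'I_m.+2 -> 'I_n.+1} :=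
  [ffun t => match unlift ord0 t with Some t' => val a t' | None => ord0 end].
have Hinc : incr gf.
  apply/forallP=> i; apply/forallP=> j; apply/implyP=> ij; rewrite !ffunE.
  case: (unliftP ord0 i) ij => [i'|] -> ; case: (unliftP ord0 j) => [j'|] -> //=.
  - by rewrite /bump /= !add1n ltnS => /(hom_lt a).
  - have := hom_le a (i:=ord0) (j:=j') (leq0n _); move: a0; simpl; lia.
exists (exist (fun f : {ffun _ -> _} => incr f) _ Hinc); apply/andP; split.
  by rewrite /= ffunE unlift_none.
apply/eqP; apply: hom_eq => t; rewrite hcompE cofaceL /= ffunE liftK //.
Qed.

Lemma cone_face p n (g : Hom p.+2 n) (a : Hom p.+1 n) (i : 'I_p.+2) : iscone g a ->
  iscone (hcomp g (coface (lift ord0 i))) (hcomp a (coface i)).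
Proof.
case/andP=> /eqP g0 /eqP ga; apply/andP; split.
  by rewrite hcompE cofaceL; apply/eqP; rewrite -g0; congr (val (val g _)); apply: val_inj.
rewrite -ga -!hcompA; apply/eqP; congr (hcomp g _).
apply: cosimp => //.
Qed.

Section K.
Variable k : fieldType.
Local Notation kH m n := {ffun Hom m n -> k^o}.

Definition cR x n (F : kH x n) : kH x.+1 n :=
  [ffun g : Hom x.+1 n => (val (val g ord0) == 0%N)%:R * F (hcomp g (coface ord0))].

Lemma cR_add x n : {morph @cR x n : f1 f2 / f1 + f2}.
Proof. by move=> f1 f2; apply/ffunP=> h; rewrite !ffunE mulrDr. Qed.
Lemma cR0 x n : @cR x n 0 = 0.
Proof. by apply/ffunP=> h; rewrite !ffunE mulr0. Qed.
Lemma cR_scale x n c (f : kH x n) : cR (c *: f) = c *: cR f.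
Proof. by apply/ffunP=> h; rewrite (ffunZk c (cR f) h) /cR !ffunE scalekE mulrCA. Qed.
Lemma cR_sum x n I (r : seq I) (P : pred I) (F : I -> kH x n) :
  cR (\sum_(i <- r | P i) F i) = \sum_(i <- r | P i) cR (F i).
Proof. exact: (big_morph _ (@cR_add x n) (@cR0 x n)). Qed.

Lemma cR_e_cone x n (g : Hom x.+1 n) (a : Hom x n) : iscone g a -> cR (e k a) = e k g.
Proof.
move=> H; apply/ffunP=> g'; rewrite /cR /e !ffunE.
case: (eqVneq g' g) => [->|ne].
  by case/andP: H => /eqP -> /eqP ->; rewrite !eqxx mulr1.
case: eqP => g'0; last by rewrite mul0r.
case: eqP => ga; last by rewrite mulr0.
by case/eqP: ne; apply: cone_uniq H; apply/andP; split; apply/eqP.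
Qed.

Lemma cR_e0 x n (a : Hom x n) : val (val a ord0) = 0%N -> cR (e k a) = 0.
Proof.
move=> a0; apply/ffunP=> g; rewrite /cR /e !ffunE.
case: eqP => g0; last by rewrite mul0r.
case: eqP => ga; last by rewrite mulr0.
exfalso; have := hom_lt g (i:=ord0) (j:=lift ord0 ord0) (isT : (0 < 1)%N).
move: a0; rewrite -ga hcompE cofaceL g0 => ->; by rewrite ltnn.
Qed.

Lemma homotR_e x n (h : Hom x.+1 n) :
  comp (cR (e k h)) (bd k x.+1) + cR (comp (e k h) (bd k x)) = e k h.
Proof.
case: (eqVneq (val (val h ord0)) 0%N) => h0.
  have Hc : iscone h (hcomp h (coface ord0)) by rewrite /iscone h0 !eqxx.
  rewrite cR_e0 // comp0l add0r dRE cR_sum big_ord_recl expr0 scale1r (cR_e_cone Hc).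
  rewrite big1 ?addr0 // => i _; rewrite cR_scale cR_e0 ?scaler0 //.
  rewrite hcompE cofaceL -h0; congr (val (val h _)); exact: val_inj.
have [g Hg] := cone_ex h0.
rewrite (cR_e_cone Hg) dRE big_ord_recl expr0 scale1r.
case/andP: (Hg) => _ /eqP ->.
rewrite dRE cR_sum -addrA [X in _ + X = _]addrC -big_split /= big1 ?addr0 // => i _.
by rewrite cR_scale (cR_e_cone (cone_face i Hg)) /bump /= add1n exprS mulN1r scaleNr subrr.
Qed.

Lemma homotR x n (F : kH x.+1 n) :
  comp (cR F) (bd k x.+1) + cR (comp F (bd k x)) = F.
Proof.
rewrite (ffun_expand F) cR_sum comp_suml comp_suml cR_sum -big_split /=.
by apply: eq_bigr => a _; rewrite cR_scale !comp_scalel cR_scale -scalerDr homotR_e.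
Qed.

End K.


Lemma sum2 (V : zmodType) n (F : 'I_n -> V) (o1 o2 : 'I_n) : o1 != o2 ->
  (forall z, z != o1 -> z != o2 -> F z = 0) -> \sum_z F z = F o1 + F o2.
Proof.
move=> ne H; rewrite (bigD1 o1) // (bigD1 o2) 1?eq_sym //= big1 ?addr0 // => z /andP[n1 n2].
exact: H.
Qed.

Lemma sum1 (V : zmodType) n (F : 'I_n -> V) (o1 : 'I_n) :
  (forall z, z != o1 -> F z = 0) -> \sum_z F z = F o1.
Proof. by move=> H; rewrite (bigD1 o1) //= big1 ?addr0. Qed.

Lemma ord_neq n (z o : 'I_n) : z != o -> (z : nat) != o.
Proof. by apply: contra => /eqP E; apply/eqP/val_inj. Qed.

Section K.
Variable k : fieldType.
Local Notation kH m n := {ffun Hom m n -> k^o}.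

Definition dLf x y (f : kH x y) : kH x y.+1 := comp (bd k y) f.
Lemma dLf_lin x y : linear (@dLf x y).
Proof. by move=> c f g; rewrite /dLf comp_addr comp_scaler. Qed.
HB.instance Definition _ x y := GRing.isLinear.Build k (kH x y) (kH x y.+1) _ (@dLf x y) (@dLf_lin x y).
Definition DL x y : 'Hom(kH x y, kH x y.+1) := linfun (@dLf x y).

Definition dRf y x (f : kH x.+1 y) : kH x y := comp f (bd k x).
Lemma dRf_lin y x : linear (@dRf y x).
Proof. by move=> c f g; rewrite /dRf comp_addl comp_scalel. Qed.
HB.instance Definition _ y x := GRing.isLinear.Build k (kH x.+1 y) (kH x y) _ (@dRf y x) (@dRf_lin y x).
Definition DR y x : 'Hom(kH x.+1 y, kH x y) := linfun (@dRf y x).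

Definition PL x z : 'Hom(kH x z.-1, kH x z) :=
  match z return 'Hom(kH x z.-1, kH x z) with 0 => 0 | z'.+1 => DL x z' end.
Definition genL x z : seq (kH x z) := vbasis (limg (PL x z))^C.
Definition genR y z : seq (kH z y) := vbasis (limg (DR y z))^C.

Lemma triv m n (f : kH m n) : (n < m)%N -> f = 0.
Proof. move=> lt; apply/ffunP=> h; have := hom_mn h; lia. Qed.

Lemma QPL x y (u : kH x y.-1) : PL x y.+1 (PL x y u) = 0.
Proof.
case: y u => [|y] u; rewrite /PL /DL.
  by rewrite zero_lfunE lfunE /= /dLf comp0r.
by rewrite !lfunE /= /dLf ddL.
Qed.

Lemma EVL x y (v : kH x y) : PL x y.+1 v = 0 -> v \in limg (PL x y).
Proof.
rewrite /PL /DL lfunE /= /dLf => dv.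
case: y v dv => [|y] v dv.
  by have := homotL0 v; rewrite dv sL0 => <-; exact: mem0v.
have := homotL v; rewrite dv sL0 add0r => <-.
have -> : comp (bd k y) (sL v) = PL x y.+1 (sL v) by rewrite /PL /DL lfunE.
by apply: memv_img; exact: memvf.
Qed.

Lemma QPR y x (u : kH x.+2 y) : DR y x (DR y x.+1 u) = 0.
Proof. by rewrite /DR !lfunE /= /dRf ddR. Qed.

Lemma EVR y x (v : kH x.+1 y) : DR y x v = 0 -> v \in limg (DR y x.+1).
Proof.
rewrite /DR lfunE /= /dRf => dv.
have := homotR v; rewrite dv cR0 addr0 => <-.
have -> : comp (cR v) (bd k x.+1) = DR y x.+1 (cR v) by rewrite /DR lfunE.
by apply: memv_img; exact: memvf.
Qed.

Definition ext n (al : 'I_n -> k) (j : nat) : k := oapp al 0 (insub j).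
Lemma extE n (al : 'I_n -> k) (j : 'I_n) : ext al j = al j.
Proof. by rewrite /ext valK. Qed.

Lemma comp_basis_l m n (g : seq (kH m n)) (be : 'I_(size g) -> k) :
  \sum_(j < size g) comp (be j *: bd k n) g`_j = DL m n (\sum_(j < size g) be j *: g`_j).
Proof.
rewrite linear_sum; apply: eq_bigr => j _; by rewrite linearZ /= /DL lfunE /= /dLf comp_scalel.
Qed.

Lemma comp_basis_r m n (g : seq (kH m.+1 n)) (be : 'I_(size g) -> k) :
  \sum_(j < size g) comp g`_j (be j *: bd k m) = DR n m (\sum_(j < size g) be j *: g`_j).
Proof.
rewrite linear_sum; apply: eq_bigr => j _; by rewrite linearZ /= /DR lfunE /= /dRf comp_scaler.
Qed.

Lemma comp_basis_id_l m n (g : seq (kH m n)) (al : 'I_(size g) -> k) :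
  \sum_(j < size g) comp (al j *: kid k n) g`_j = \sum_(j < size g) al j *: g`_j.
Proof. by apply: eq_bigr => j _; rewrite comp_scalel comp_kid. Qed.

Lemma comp_basis_id_r m n (g : seq (kH m n)) (al : 'I_(size g) -> k) :
  \sum_(j < size g) comp g`_j (al j *: kid k m) = \sum_(j < size g) al j *: g`_j.
Proof. by apply: eq_bigr => j _; rewrite comp_scaler comp_kidr. Qed.

End K.


Section K.
Variable k : fieldType.
Local Notation kH m n := {ffun Hom m n -> k^o}.

Lemma left_main : left_free k.
Proof.
move=> x; exists (genL k x) => y.
case: y => [|y].
  have QP : forall u : kH x 0, PL k x 0 (\1%VF u) = 0 by move=> u; rewrite /= zero_lfunE.
  have EV : forall v : kH x 0, PL k x 0 v = 0 -> v \in limg (\1%VF : 'Hom(kH x 0, kH x 0)).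
    by move=> v _; rewrite -[v]id_lfunE; apply: memv_img; exact: memvf.
  split.
    move=> f.
    have [al [be Hf]] := @exist_decomp _ _ _ _ \1%VF (PL k x 0) QP f.
    exists (fun z j => ext al j *: upath k z 0); split; first by move=> z j; eexists.
    rewrite big_ord1 /= upath_id Hf /= zero_lfunE addr0.
    by apply: eq_bigr => j _; rewrite comp_scalel comp_kid extE.
  move=> a Ha.
  pose C z j := proj1_sig (constructive_indefinite_description _ (Ha z j)).
  have HC : forall z j, a z j = C z j *: upath k z 0.
    by move=> z j; exact: (proj2_sig (constructive_indefinite_description _ (Ha z j))).
  rewrite big_ord1 => H0.
  have H0' : \sum_j C ord0 j *: (genL k x 0)`_j + PL k x 0 (\sum_(j < size (vbasis (limg (\1%VF : 'Hom(kH x 0, kH x 0)))^C : seq _)) 0 *: (vbasis (limg \1%VF)^C : seq _)`_j) = 0.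
    rewrite /= zero_lfunE addr0 -[RHS]H0; apply: eq_bigr => j _.
    by rewrite HC /= upath_id comp_scalel comp_kid.
  have [H1 _] := @uniq_decomp _ _ _ _ \1%VF (PL k x 0) EV _ _ H0'.
  move=> [[|z] Hz] j //.
  by rewrite HC (bool_irrelevance Hz (ltn0Sn 0)) H1 scale0r.
pose o1 : 'I_y.+2 := ord_max.
pose o2 : 'I_y.+2 := Ordinal (leqnSn y.+1).
have ne12 : o1 != o2 by apply/eqP => /(congr1 val) /=; lia.
split.
  move=> f.
  have [al [be Hf]] := @exist_decomp _ _ _ _ (PL k x y) (PL k x y.+1) (@QPL k x y) f.
  pose cf (z j : nat) := if z == y.+1 then ext al j else if z == y then ext be j else 0.
  exists (fun z j => cf z j *: upath k z y.+1); split; first by move=> z j; eexists.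
  rewrite (sum2 ne12); last first.
    move=> z n1 n2; apply: big1 => j _; rewrite upath_far ?scaler0 ?comp0l //.
    have := ord_neq n1; have := ord_neq n2; have := ltn_ord z; rewrite /= => *; lia.
  rewrite /= /cf eqxx (ltn_eqF (ltnSn y)) eqxx upath_id upath_bd Hf.
  congr (_ + _).
    by apply: eq_bigr => j _; rewrite comp_scalel comp_kid extE.
  rewrite /= /DL lfunE /= linear_sum; apply: eq_bigr => j _.
  by rewrite linearZ /= /dLf comp_scalel extE.
move=> a Ha.
pose C z j := proj1_sig (constructive_indefinite_description _ (Ha z j)).
have HC : forall z j, a z j = C z j *: upath k z y.+1.
  by move=> z j; exact: (proj2_sig (constructive_indefinite_description _ (Ha z j))).
rewrite (sum2 ne12); last first.
  move=> z n1 n2; apply: big1 => j _; rewrite HC upath_far ?scaler0 ?comp0l //.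
  have := ord_neq n1; have := ord_neq n2; have := ltn_ord z; rewrite /= => *; lia.
move=> H0.
have H0' : \sum_j C o1 j *: (genL k x y.+1)`_j + PL k x y.+1 (\sum_j C o2 j *: (genL k x y)`_j) = 0.
  rewrite -[RHS]H0; congr (_ + _).
    by apply: eq_bigr => j _; rewrite HC /= upath_id comp_scalel comp_kid.
  rewrite /= /DL lfunE /= linear_sum; apply: eq_bigr => j _.
  by rewrite linearZ /= /dLf HC /= upath_bd comp_scalel.
have [H1 H2] := @uniq_decomp _ _ _ _ (PL k x y) (PL k x y.+1) (@EVL k x y) _ _ H0'.
move=> [z Hz] j.
case: (ltngtP z y) => [lt|gt|E].
- by rewrite HC upath_far ?scaler0 //=; lia.
- have E : z = y.+1 by lia.
  subst z; by rewrite HC (bool_irrelevance Hz (ltnSn _)); move: (H1 j) => /= ->; rewrite scale0r.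
- subst z; by rewrite HC (bool_irrelevance Hz (leqnSn _)); move: (H2 j) => /= ->; rewrite scale0r.
Qed.


Lemma right_main : right_free k.
Proof.
move=> y; exists (genR k y) => x.
case: (ltnP y x) => [lt|le].
  split.
    move=> f; exists (fun z j => 0); split; first by move=> z j; exists 0; rewrite scale0r.
    rewrite (triv f lt) big1 // => z _; rewrite big1 // => j _; exact: comp0r.
  move=> a _ _ z j; apply: triv; have := ltn_ord z; lia.
case: (ltngtP x y) le => // [lt|E] _; last first.
  subst x.
  have zero_top : forall z : 'I_y.+1, z != ord_max -> (z < y)%N.
    by move=> z nz; have := ord_neq nz; have := ltn_ord z; rewrite /= => *; lia.
  split.
    move=> f.
    have [al [be Hf]] := @exist_decomp _ _ _ _ (DR k y y.+1) (DR k y y) (@QPR k y y) f.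
    exists (fun (z : 'I_y.+1) j => (if (z : nat) == y then ext al j else 0) *: upath k y z); split; first by move=> z j; eexists.
    rewrite (sum1 (o1 := ord_max)); last first.
      move=> z nz; apply: big1 => j _; rewrite upath_gt ?scaler0 ?comp0r //; exact: zero_top.
    rewrite /= eqxx upath_id Hf (triv (\sum_j _ *: _) (ltnSn y)) linear0 addr0.
    by apply: eq_bigr => j _; rewrite comp_scaler comp_kidr extE.
  move=> a Ha.
  pose C z j := proj1_sig (constructive_indefinite_description _ (Ha z j)).
  have HC : forall z j, a z j = C z j *: upath k y z.
    by move=> z j; exact: (proj2_sig (constructive_indefinite_description _ (Ha z j))).
  rewrite (sum1 (o1 := ord_max)); last first.
    move=> z nz; apply: big1 => j _; rewrite HC upath_gt ?scaler0 ?comp0r //; exact: zero_top.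
  move=> H0.
  have H0' : \sum_j C ord_max j *: (genR k y y)`_j +
     DR k y y (\sum_(j < size (genR k y y.+1)) 0 *: (genR k y y.+1)`_j) = 0.
    rewrite (triv (\sum_j _ *: _) (ltnSn y)) linear0 addr0 -[RHS]H0.
    by apply: eq_bigr => j _; rewrite HC /= upath_id comp_scaler comp_kidr.
  have [H1 _] := @uniq_decomp _ _ _ _ (DR k y y.+1) (DR k y y) (@EVR k y y) _ _ H0'.
  move=> [z Hz] j.
  case: (ltngtP z y) => [lt|gt|E].
  - by rewrite HC upath_gt ?scaler0.
  - by exfalso; lia.
  - subst z; by rewrite HC (bool_irrelevance Hz (ltnSn _)); move: (H1 j) => /= ->; rewrite scale0r.
have hx : (x < y.+1)%N by lia.
have hx1 : (x.+1 < y.+1)%N by lia.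
pose o1 : 'I_y.+1 := Ordinal hx.
pose o2 : 'I_y.+1 := Ordinal hx1.
have ne12 : o1 != o2 by apply/eqP => /(congr1 val) /=; lia.
have zero_mid : forall z : 'I_y.+1, z != o1 -> z != o2 -> ((z < x)%N \/ (x.+2 <= z)%N).
  by move=> z n1 n2; have := ord_neq n1; have := ord_neq n2; rewrite /= => *; lia.
have upz : forall z : 'I_y.+1, z != o1 -> z != o2 -> upath k x z = 0.
  move=> z n1 n2; case: (zero_mid z n1 n2) => h; [exact: upath_gt | exact: upath_far].
split.
  move=> f.
  have [al [be Hf]] := @exist_decomp _ _ _ _ (DR k y x.+1) (DR k y x) (@QPR k y x) f.
  pose cf (z j : nat) := if z == x then ext al j else if z == x.+1 then ext be j else 0.
  exists (fun (z : 'I_y.+1) j => cf z j *: upath k x z); split; first by move=> z j; eexists.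
  rewrite (sum2 ne12); last first.
    by move=> z n1 n2; apply: big1 => j _; rewrite upz ?scaler0 ?comp0r.
  rewrite /= /cf eqxx (gtn_eqF (ltnSn x)) eqxx upath_id upath_bd Hf.
  congr (_ + _).
    by apply: eq_bigr => j _; rewrite comp_scaler comp_kidr extE.
  rewrite /= /DR lfunE /= linear_sum; apply: eq_bigr => j _.
  by rewrite linearZ /= /dRf comp_scaler extE.
move=> a Ha.
pose C z j := proj1_sig (constructive_indefinite_description _ (Ha z j)).
have HC : forall z j, a z j = C z j *: upath k x z.
  by move=> z j; exact: (proj2_sig (constructive_indefinite_description _ (Ha z j))).
rewrite (sum2 ne12); last first.
  by move=> z n1 n2; apply: big1 => j _; rewrite HC upz ?scaler0 ?comp0r.
move=> H0.
have H0' : \sum_j C o1 j *: (genR k y x)`_j + DR k y x (\sum_j C o2 j *: (genR k y x.+1)`_j) = 0.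
  rewrite -[RHS]H0; congr (_ + _).
    by apply: eq_bigr => j _; rewrite HC /= upath_id comp_scaler comp_kidr.
  rewrite /= /DR lfunE /= linear_sum; apply: eq_bigr => j _.
  by rewrite linearZ /= /dRf HC /= upath_bd comp_scaler.
have [H1 H2] := @uniq_decomp _ _ _ _ (DR k y x.+1) (DR k y x) (@EVR k y x) _ _ H0'.
move=> [z Hz] j.
case: (ltngtP z x) => [lt'|gt|E].
- by rewrite HC upath_gt ?scaler0.
- case: (eqVneq z x.+1) => [E|ne].
    subst z; by rewrite HC (bool_irrelevance Hz hx1); move: (H2 j) => /= ->; rewrite scale0r.
  rewrite HC upath_far ?scaler0 //; move/eqP: ne; rewrite /=; lia.
- subst z; by rewrite HC (bool_irrelevance Hz hx); move: (H1 j) => /= ->; rewrite scale0r.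
Qed.

End K.

Theorem lemma2p1 (k : fieldType) : left_free k /\ right_free k.
Proof. split; [exact: left_main | exact: right_main]. Qed.
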